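(* For every integer $n \geq 3$, the line graph $L(K_n)$ of the complete graph $K_n$ satisfies $c_V(L(K_n)) = 2(n-2)$, $c_E(L(K_n)) \geq n(n-2)/3$, and $c_{E,\mathrm{r}}(L(K_n)) \geq n^2/12$.
   Context: The line graph $L(G)$ has the edges of $G$ as vertices, two being adjacent iff they share an endpoint. Games: players alternate turns, cops first; initially the cop player places all cops, then the robber is placed on a vertex (several pieces may share a position). In a turn each piece of the moving player may stay or make one move (no obligation to move). The robber sits on vertices and moves to adjacent vertices; $v_r$ is his current vertex. Vertex version: cops on vertices moving to adjacent vertices; cops win when every neighbor of $v_r$ is occupied by a cop; $c_V(G)$ is the least number of cops forcing a win in finitely many turns. Edge version: cops sit on edges; a cop on edge $e$ may move to any edge sharing an endpoint with $e$; cops win when every edge incident to $v_r$ is occupied; number $c_E(G)$. Restrictive edge version: as the edge version, but the robber may not move along an edge currently occupied by a cop; number $c_{E,\mathrm{r}}(G)$. *)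

(* Defs.v *)
From mathcomp Require Import all_boot.
Set Implicit Arguments. Unset Strict Implicit. Unset Printing Implicit Defensive.

(* A simple graph is given by a finite vertex type V and a symmetric,
   irreflexive adjacency relation adj : rel V. *)

Definition is_edge (V : finType) (adj : rel V) (A : {set V}) : bool :=
  [exists u, exists v, adj u v && (A == [set u; v])].

Definition edge_of (V : finType) (adj : rel V) := {A : {set V} | is_edge adj A}.

Definition line_adj (V : finType) (adj : rel V) : rel (edge_of adj) :=
  fun e f => (e != f) && [exists v, (v \in val e) && (v \in val f)].

Definition Kn_adj (n : nat) : rel 'I_n := fun u v => u != v.

Definition LKn (n : nat) : finType := edge_of (@Kn_adj n).
Definition LKn_adj (n : nat) : rel (LKn n) := @line_adj _ (@Kn_adj n).

(* Generic cops-and-robber game with k cops.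
   P : positions of the cops; cm p q : a cop at p may go to q (incl. staying);
   rm c r r' : the robber at r may go to r' (incl. staying) when cops are at c;
   caught c r : the cops at c win against the robber at r.
   cwin c r : cops at c, robber at r, cops to move (win already checked),
   and the cops can force a win in finitely many turns (least fixed point). *)
Inductive cwin (V P : finType) (k : nat) (cm : rel P)
    (rm : ('I_k -> P) -> rel V) (caught : ('I_k -> P) -> pred V)
  : ('I_k -> P) -> V -> Prop :=
| cwin_now c r : caught c r -> cwin cm rm caught c r
| cwin_step c r (c' : 'I_k -> P) :
    (forall i, cm (c i) (c' i)) ->
    (caught c' r \/ (forall r', rm c' r r' -> cwin cm rm caught c' r')) ->
    cwin cm rm caught c r.

Definition cops_win (V P : finType) (k : nat) (cm : rel P)
    (rm : ('I_k -> P) -> rel V) (caught : ('I_k -> P) -> pred V) : Prop :=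
  exists c0 : 'I_k -> P, forall r : V, cwin cm rm caught c0 r.

Definition vertex_win (V : finType) (adj : rel V) (k : nat) : Prop :=
  @cops_win V V k (fun p q => (p == q) || adj p q)
    (fun _ r r' => (r == r') || adj r r')
    (fun c r => [forall w, adj r w ==> [exists i, c i == w]]).

Definition edge_cm (V : finType) (adj : rel V) : rel (edge_of adj) :=
  fun e f => (e == f) || [exists v, (v \in val e) && (v \in val f)].

Definition edge_caught (V : finType) (adj : rel V) (k : nat)
  (c : 'I_k -> edge_of adj) (r : V) : bool :=
  [forall e : edge_of adj, (r \in val e) ==> [exists i, c i == e]].

Definition edge_win (V : finType) (adj : rel V) (k : nat) : Prop :=
  @cops_win V (edge_of adj) k (@edge_cm V adj)
    (fun _ r r' => (r == r') || adj r r')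
    (@edge_caught V adj k).

Definition redge_win (V : finType) (adj : rel V) (k : nat) : Prop :=
  @cops_win V (edge_of adj) k (@edge_cm V adj)
    (fun c r r' => (r == r') ||
        (adj r r' && ~~ [exists i, val (c i) == [set r; r']]))
    (@edge_caught V adj k).

(* Main.v *)
Require Import Defs.
From mathcomp Require Import all_boot.
From mathcomp Require Import zify.
Set Implicit Arguments. Unset Strict Implicit. Unset Printing Implicit Defensive.


Lemma no_cwin (V P : finType) (k : nat) (cm : rel P)
    (rm : ('I_k -> P) -> rel V) (caught : ('I_k -> P) -> pred V)
    (Inv : ('I_k -> P) -> V -> Prop) :
  (forall c r, Inv c r -> ~~ caught c r) ->
  (forall c r c', Inv c r -> (forall i, cm (c i) (c' i)) ->
      ~~ caught c' r /\ exists r', rm c' r r' /\ Inv c' r') ->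
  forall c r, cwin cm rm caught c r -> Inv c r -> False.
Proof.
move=> H1 H2.
fix F 3 => c r [c0 r0 Hc HI| c0 r0 c' Hm Hor HI].
- by move: (H1 _ _ HI); rewrite Hc.
- case: (H2 _ _ _ HI Hm) => Hnc [r' [Hrm HI']].
  case: Hor => [Hc|Hall]; first by move: Hnc; rewrite Hc.
  exact: (F c' r' (Hall r' Hrm) HI').
Qed.

Lemma no_cops_win (V P : finType) (k : nat) (cm : rel P)
    (rm : ('I_k -> P) -> rel V) (caught : ('I_k -> P) -> pred V)
    (Inv : ('I_k -> P) -> V -> Prop) :
  (forall c r, Inv c r -> ~~ caught c r) ->
  (forall c r c', Inv c r -> (forall i, cm (c i) (c' i)) ->
      ~~ caught c' r /\ exists r', rm c' r r' /\ Inv c' r') ->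
  (forall c, exists r, Inv c r) ->
  ~ cops_win cm rm caught.
Proof.
move=> H1 H2 H3 [c0 Hc0]; case: (H3 c0) => r HI.
exact: (no_cwin H1 H2 (Hc0 r) HI).
Qed.

Lemma edgeP n (e : LKn n) : exists a b, a != b /\ val e = [set a; b].
Proof.
case: e => A /= /existsP [u /existsP [v /andP [Huv /eqP ->]]].
by exists u, v.
Qed.

Definition LP n := edge_of (@LKn_adj n).

Lemma ledgeP n (C : LP n) : exists e1 e2, val C = [set e1; e2] /\ e1 != e2 /\
   exists v, v \in val e1 /\ v \in val e2.
Proof.
case: C => A /= /existsP [u /existsP [v /andP [/andP [Huv /existsP [x /andP [h1 h2]]] /eqP ->]]].
by exists u, v; split => //; split => //; exists x.
Qed.

Definition vset n (C : LP n) : {set 'I_n} := \bigcup_(e in val C) val e.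
Definition mm n k (c : 'I_k -> LP n) (x : 'I_n) := #|[set i | x \in vset (c i)]|.

Lemma vset_card n (C : LP n) : #|vset C| <= 3.
Proof.
have [e1 [e2 [HC [Hne [v [h1 h2]]]]]] := ledgeP C.
rewrite /vset HC big_setU1 /= ?inE // big_set1.
rewrite cardsU.
move: h1 h2.
have [a [b [_ E1]]] := edgeP e1.
have [a' [b' [_ E2]]] := edgeP e2.
change (sval e1) with (val e1); change (sval e2) with (val e2).
rewrite E1 E2 => h1 h2.
have : 0 < #|[set a; b] :&: [set a'; b']|.
  by apply/card_gt0P; exists v; rewrite inE h1 h2.
move=> H; rewrite !cards2; apply: leq_trans (leq_sub2l _ H) _; by case: (a != b); case: (_ != _).
Qed.

Lemma sum_mm n k (c : 'I_k -> LP n) : \sum_x mm c x <= 3 * k.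
Proof.
rewrite /mm.
have -> : \sum_x #|[set i | x \in vset (c i)]| = \sum_i #|vset (c i)|.
  transitivity (\sum_x \sum_i (x \in vset (c i)) : nat).
    apply: eq_bigr => x _; rewrite -sum1_card big_mkcond /=; apply: eq_bigr => i _.
    by rewrite inE; case: (_ \in _).
  rewrite exchange_big /=; apply: eq_bigr => i _.
  rewrite -sum1_card [RHS]big_mkcond; apply: eq_bigr => j _; by case: (_ \in _).
apply: (@leq_trans (\sum_(i < k) 3)); first by apply: leq_sum => i _; exact: vset_card.
by rewrite sum_nat_const card_ord mulnC.
Qed.

Definition ed n (d : LKn n) (p z : 'I_n) : LKn n := insubd d [set p; z].

Lemma val_ed n (d : LKn n) p z : p != z -> val (ed d p z) = [set p; z].
Proof.
move=> H; rewrite /ed val_insubd.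
have -> : is_edge (@Kn_adj n) [set p; z] by apply/existsP; exists p; apply/existsP; exists z; rewrite /Kn_adj H eqxx.
by [].
Qed.

Lemma pair_lem (T : finType) (u v x y e : T) : x \in [set u; v] -> y \in [set u; v] -> x != y ->
  e \in [set u; v] -> (e == x) || (e == y).
Proof.
rewrite !in_set2.
by case/orP=> /eqP-> ; case/orP => /eqP -> ; rewrite ?eqxx // => _; case/orP=> /eqP ->; rewrite eqxx ?orbT.
Qed.

Lemma in_LP n (C : LP n) (x y e : LKn n) : x \in val C -> y \in val C -> x != y ->
  e \in val C -> (e == x) || (e == y).
Proof.
have [e1 [e2 [-> _]]] := ledgeP C; exact: pair_lem.
Qed.

Lemma count_key n k (c c' : 'I_k -> LP n) (step : forall i, edge_cm (c i) (c' i))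
  (r : LKn n) (p : 'I_n) (hp : p \in val r) (Z : {set 'I_n}) :
  (forall z, z \in Z -> z \notin val r /\ exists i, r \in val (c' i) /\ ed r p z \in val (c' i)) ->
  #|Z| <= mm c p.
Proof.
move=> HZ.
set I := [set i | p \in vset (c i)].
pose g i := odflt p [pick z in vset (c' i) :\: val r].
have sub : Z \subset g @: I.
  apply/subsetP => z Hz; case: (HZ z Hz) => zr [i [h1 h2]].
  have pz : p != z by apply/eqP => E; move: zr; rewrite -E hp.
  have rne : r != ed r p z.
    by apply/eqP => E; move: zr; rewrite E val_ed // !inE eqxx orbT.
  have inv : forall e, e \in val (c' i) -> (e == r) || (e == ed r p z).
    by move=> e he; apply: in_LP h1 h2 rne he.
  apply/imsetP; exists i.
  - rewrite inE; case/orP: (step i) => [/eqP ->| /existsP [e /andP [he1 he2]]].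
    + by apply/bigcupP; exists r.
    + apply/bigcupP; exists e => //.
      by case/orP: (inv e he2) => /eqP ->; rewrite ?val_ed // !inE eqxx.
  - rewrite /g; case: pickP => [y Hy | Hn] /=.
    + move: Hy; rewrite inE => /andP [yr /bigcupP [e he hy]].
      case/orP: (inv e he) => /eqP Ee; move: hy; rewrite Ee.
        by rewrite (negbTE yr).
      rewrite val_ed // !inE => /orP [/eqP yp|/eqP //].
      by move: yr; rewrite yp hp.
    + have := Hn z; rewrite inE zr /=.
      suff -> : z \in vset (c' i) by [].
      by apply/bigcupP; exists (ed r p z) => //; rewrite val_ed // !inE eqxx orbT.
apply: leq_trans (subset_leq_card sub) _.
exact: leq_imset_card.
Qed.

Lemma LP_of n (r f : LKn n) (p : 'I_n) : r != f -> p \in val r -> p \in val f ->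
  is_edge (@LKn_adj n) [set r; f].
Proof.
move=> H h1 h2; apply/existsP; exists r; apply/existsP; exists f; rewrite eqxx andbT.
by rewrite /LKn_adj /line_adj H /=; apply/existsP; exists p; rewrite h1 h2.
Qed.

Lemma card_edge n (r : LKn n) : #|val r| = 2.
Proof. by have [a [b [H ->]]] := edgeP r; rewrite cards2 H. Qed.

Lemma threat n k (c c' : 'I_k -> LP n) (step : forall i, edge_cm (c i) (c' i))
  (r : LKn n) (p : 'I_n) (hp : p \in val r) : edge_caught c' r -> n - 2 <= mm c p.
Proof.
move=> /forallP Hc.
have -> : n - 2 = #|~: val r| by have := cardsC (val r); rewrite card_edge card_ord; lia.
apply: (count_key step hp) => z; rewrite inE => zr; split => //.
have pz : p != z by apply/eqP => E; move: zr; rewrite -E hp.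
have rne : r != ed r p z.
  by apply/eqP => E; move: zr; rewrite E val_ed // !inE eqxx orbT.
have HT := LP_of rne hp (_ : p \in val (ed r p z)).
rewrite val_ed // !inE eqxx /= in HT; have {}HT := HT isT.
have := Hc (exist (fun A => is_edge (@LKn_adj n) A) _ HT); rewrite /= !inE eqxx /= => /existsP [i /eqP Ei].
by exists i; rewrite Ei /= !inE !eqxx ?orbT.
Qed.

Definition Inv n k (th : nat) (c : 'I_k -> LP n) (r : LKn n) :=
  exists p, p \in val r /\ mm c p <= th.

Lemma low_exists n k (c : 'I_k -> LP n) th : 3 * k < n * th.+1 -> exists x, mm c x <= th.
Proof.
move=> H; case: (boolP [exists x, mm c x <= th]) => [/existsP [x Hx]|/existsPn Hn].
  by exists x.
have : \sum_(x < n) th.+1 <= \sum_x mm c x.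
  by apply: leq_sum => x _; have := Hn x; rewrite -ltnNge.
rewrite sum_nat_const card_ord => H2; have := sum_mm c; lia.
Qed.

Lemma edge_exists n (x : 'I_n) : 2 <= n -> exists r : LKn n, x \in val r.
Proof.
move=> Hn.
have : 0 < #|~: [set x]| by rewrite cardsC1 card_ord; lia.
case/card_gt0P => y; rewrite !inE => Hy.
have He : is_edge (@Kn_adj n) [set x; y].
  by apply/existsP; exists x; apply/existsP; exists y; rewrite /Kn_adj eq_sym Hy eqxx.
by exists (exist (fun A => is_edge (@Kn_adj n) A) _ He); rewrite /= !inE eqxx.
Qed.

Lemma cm_refl n (e : LP n) : edge_cm e e.
Proof. by rewrite /edge_cm eqxx. Qed.

Lemma inv_nc n k th (c : 'I_k -> LP n) r : th < n - 2 -> Inv th c r -> ~~ edge_caught c r.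
Proof.
move=> Hth [p [hp Hm]]; apply/negP => Hc.
have := threat (fun i => cm_refl (c i)) hp Hc; lia.
Qed.

Lemma inv_nc' n k th (c c' : 'I_k -> LP n) r : th < n - 2 -> Inv th c r ->
  (forall i, edge_cm (c i) (c' i)) -> ~~ edge_caught c' r.
Proof.
move=> Hth [p [hp Hm]] step; apply/negP => Hc.
have := threat step hp Hc; lia.
Qed.

Lemma edge_lower n k : 3 <= n -> 3 * k < n * (n - 2) -> ~ edge_win (@LKn_adj n) k.
Proof.
move=> Hn Hk.
have Hth : n - 3 < n - 2 by lia.
have Hk' : 3 * k < n * (n - 3).+1 by have -> : (n - 3).+1 = n - 2 by lia.
apply: (@no_cops_win _ _ _ _ _ _ (@Inv n k (n - 3))).
- by move=> c r; apply: inv_nc.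
- move=> c r c' HI step; split; first exact: inv_nc' HI step.
  have [x Hx] := low_exists c' Hk'.
  case: (boolP (x \in val r)) => xr.
    by exists r; rewrite eqxx; split => //; exists x.
  have [a [b [ab Er]]] := edgeP r.
  have ha : a \in val r by rewrite Er !inE eqxx.
  have ax : a != x by apply/eqP => E; move: xr; rewrite -E ha.
  exists (ed r a x); split; last by exists x; rewrite val_ed // !inE eqxx orbT.
  apply/orP; right; rewrite /LKn_adj /line_adj; apply/andP; split.
    by apply/eqP => E; move: xr; rewrite E val_ed // !inE eqxx orbT.
  by apply/existsP; exists a; rewrite ha val_ed // !inE eqxx.
- move=> c; have [x Hx] := low_exists c Hk'.
  have [r hr] : exists r : LKn n, x \in val r by apply: edge_exists; lia.
  by exists r, x.
Qed.

Lemma sum_ge_H n k (c : 'I_k -> LP n) th :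
  #|[set x | th < mm c x]| * th.+1 <= 3 * k.
Proof.
apply: leq_trans (sum_mm c).
rewrite -sum1_card big_distrl /= big_mkcond /=.
apply: leq_sum => x _; rewrite inE; case: ifP => //; by rewrite mul1n.
Qed.

Lemma redge_lower n k th : 3 <= n -> th < n - 2 -> 3 * k < (n - th) * th.+1 ->
  ~ redge_win (@LKn_adj n) k.
Proof.
move=> Hn Hth Hk.
have Hk' : 3 * k < n * th.+1.
  by apply: leq_trans Hk _; apply: leq_mul => //; apply: leq_subr.
apply: (@no_cops_win _ _ _ _ _ _ (@Inv n k th)).
- by move=> c r; apply: inv_nc.
- move=> c r c' HI step; split; first exact: inv_nc' HI step.
  case: (boolP [exists y in val r, mm c' y <= th]) => [/existsP [y /andP [yr Hy]]|/exists_inPn Hall].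
    by exists r; rewrite eqxx; split => //; exists y.
  case: HI => p [hp Hp].
  set Bl := [set z | (z \notin val r) && [exists i, val (c' i) == [set r; ed r p z]]].
  have HBl : #|Bl| <= th.
    apply: leq_trans Hp; apply: (count_key step hp) => z; rewrite inE => /andP [zr /existsP [i /eqP Ei]].
    by split => //; exists i; rewrite Ei !inE !eqxx ?orbT.
  set H := [set x | th < mm c' x].
  have rH : val r \subset H by apply/subsetP => y yr; rewrite inE ltnNge; apply: Hall.
  have [z [zr zB zl]] : exists z, [/\ z \notin val r, z \notin Bl & mm c' z <= th].
    case: (boolP [exists z, [&& z \notin val r, z \notin Bl & mm c' z <= th]]) => [/existsP [z /and3P [h1 h2 h3]]|/existsPn Hn'].
      by exists z.
    have sub : ~: val r \subset (H :\: val r) :|: Bl.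
      apply/subsetP => z; rewrite in_setC => zr; have := Hn' z; rewrite zr /=.
      case: (boolP (z \in Bl)) => hb; first by rewrite in_setU hb orbT.
      by rewrite /= -ltnNge => hm; rewrite in_setU in_setD inE hm zr.
    have c1 := subset_leq_card sub.
    have c2 := cardsU (H :\: val r) Bl.
    have c3 := cardsID (val r) H.
    have c4 : #|H :&: val r| = 2 by rewrite (setIidPr rH) card_edge.
    have c5 : #|~: val r| = n - 2 by have := cardsC (val r); rewrite card_edge card_ord; lia.
    have c6 : #|H| * th.+1 <= 3 * k by exact: sum_ge_H.
    have c7 : n - th <= #|H|.
      rewrite -c3 c4; move: c1; rewrite c5 c2 => c1; have := leq_trans c1 (leq_subr _ _); move: HBl Hth; lia.
    have c8 := leq_trans (leq_mul c7 (leqnn th.+1)) c6.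
    by move: (leq_trans Hk c8); rewrite ltnn.
  exists (ed r p z); split; last by exists z; rewrite val_ed ?inE ?eqxx ?orbT //; apply/eqP => E; move: zr; rewrite -E hp.
  have pz : p != z by apply/eqP => E; move: zr; rewrite -E hp.
  apply/orP; right; apply/andP; split.
    rewrite /LKn_adj /line_adj; apply/andP; split.
      by apply/eqP => E; move: zr; rewrite E val_ed // !inE eqxx orbT.
    by apply/existsP; exists p; rewrite hp val_ed // !inE eqxx.
  by move: zB; rewrite inE zr.
- move=> c; have [x Hx] := low_exists c Hk'.
  have [r hr] : exists r : LKn n, x \in val r by apply: edge_exists; lia.
  by exists r, x.
Qed.

Lemma vert_nc n k (c : 'I_k -> LKn n) (r : LKn n) : k < 2 * (n - 2) ->
  ~~ [forall w, LKn_adj r w ==> [exists i, c i == w]].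
Proof.
move=> Hk; apply/negP => /forallP Hc.
have [a [b [ab Er]]] := edgeP r.
have ha : a \in val r by rewrite Er !inE eqxx.
have hb : b \in val r by rewrite Er !inE eqxx orbT.
pose G i := (a \in val (c i), odflt a [pick z in val (c i) :\: val r]).
have sub : setX [set: bool] (~: val r) \subset G @: [set: 'I_k].
  apply/subsetP => [[s z]]; rewrite !inE /= => zr.
  have [x Ex] : {x | x = if s then a else b} by eexists.
  have hx : x \in val r by rewrite Ex; case: (s).
  have xz : x != z by apply/eqP => E; move: zr; rewrite -E hx.
  have rne : r != ed r x z.
    by apply/eqP => E; move: zr; rewrite E val_ed // !inE eqxx orbT.
  have Hadj : LKn_adj r (ed r x z).
    rewrite /LKn_adj /line_adj rne /=; apply/existsP; exists x; rewrite hx val_ed // !inE eqxx //.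
  have := Hc (ed r x z); rewrite Hadj /= => /existsP [i /eqP Ei].
  apply/imsetP; exists i; rewrite ?inE // /G Ei val_ed //.
  congr pair.
    rewrite Ex; case: (s); rewrite !inE ?eqxx //=.
    apply/esym/negbTE; rewrite negb_or; apply/andP; split; first by [].
    by apply/eqP => E; move: zr; rewrite -E ha.
  case: pickP => [y|Hn] /=.
    rewrite !inE => /andP [yr /orP [/eqP yx|/eqP //]].
    by move: yr; rewrite yx hx.
  by have := Hn z; rewrite !inE zr eqxx orbT.
have := subset_leq_card sub.
rewrite cardsX cardsT card_bool.
have c5 : #|~: val r| = n - 2 by have := cardsC (val r); rewrite card_edge card_ord; lia.
rewrite c5 => h; have := leq_trans h (leq_imset_card _ _); rewrite cardsT card_ord; lia.
Qed.

Lemma vertex_lower n k : 3 <= n -> k < 2 * (n - 2) -> ~ vertex_win (@LKn_adj n) k.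
Proof.
move=> Hn Hk.
apply: (@no_cops_win _ _ _ _ _ _ (fun _ _ => True)).
- by move=> c r _; apply: vert_nc.
- move=> c r c' _ _; split; first exact: vert_nc.
  by exists r; rewrite eqxx.
- move=> c; have x : 'I_n by exists 0; lia.
  have [r _] : exists r : LKn n, x \in val r by apply: edge_exists; lia.
  by exists r.
Qed.


Lemma vwin_of (V : finType) (adj : rel V) (k : nat) (J : finType) (pos : J -> V)
  (mu : V -> J -> V) : 0 < #|J| -> #|J| <= k ->
  (forall r j, (pos j == mu r j) || adj (pos j) (mu r j)) ->
  (forall r w, adj r w -> exists j, mu r j = w) -> vertex_win adj k.
Proof.
move=> /card_gt0P [j0 _] HJ Hm Hs.
pose idx (i : 'I_k) := nth j0 (enum J) i.
exists (fun i => pos (idx i)) => r.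
apply: (@cwin_step _ _ _ _ _ _ _ _ (fun i => mu r (idx i))).
  by move=> i; apply: Hm.
left; apply/forallP => w; apply/implyP => Hw.
have [j Hj] := Hs r w Hw.
have Hi : index j (enum J) < k.
  by apply: leq_trans HJ; rewrite cardE index_mem mem_enum.
apply/existsP; exists (Ordinal Hi); rewrite /idx /= nth_index ?mem_enum //.
by rewrite Hj.
Qed.


Definition vS m (s : bool) : 'I_m.+3 := if s then @Ordinal m.+3 1 isT else ord0.
Definition vX m (x : 'I_m.+1) : 'I_m.+3 := @Ordinal m.+3 x.+2 (ltn_ord x).

Arguments vS : simpl never.
Arguments vX : simpl never.

Lemma vcases m (v : 'I_m.+3) : v = vS m false \/ v = vS m true \/ exists x, v = vX x.
Proof.
case: v => [[|[|v]] Hv].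
- by left; apply: val_inj.
- by right; left; apply: val_inj.
- right; right; have Hv' : v < m.+1 by [].
  by exists (Ordinal Hv'); apply: val_inj.
Qed.

Lemma vS_inj m : injective (@vS m).
Proof. by case; case. Qed.

Lemma vX_inj m : injective (@vX m).
Proof. by move=> x y /(congr1 val) /= [] /val_inj. Qed.

Lemma vXS m x s : (@vX m x == vS m s) = false.
Proof. by case: s; apply/negbTE; rewrite -val_eqE /=. Qed.

Lemma vSX m x s : (vS m s == @vX m x) = false.
Proof. by rewrite eq_sym vXS. Qed.

Lemma vSS m s t : (vS m s == vS m t) = (s == t).
Proof. by case: s; case: t. Qed.


Lemma is_edge2 n (a b : 'I_n) : a != b -> is_edge (@Kn_adj n) [set a; b].
Proof. by move=> H; apply/existsP; exists a; apply/existsP; exists b; rewrite /Kn_adj H eqxx. Qed.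

Definition e01 m : LKn m.+3 :=
  exist (fun A => is_edge (@Kn_adj m.+3) A) _ (@is_edge2 _ (vS m false) (vS m true) isT).

Definition ends m (r : LKn m.+3) : 'I_m.+3 * 'I_m.+3 :=
  odflt (vS m false, vS m true)
    [pick ab : 'I_m.+3 * 'I_m.+3 | (ab.1 != ab.2) && (val r == [set ab.1; ab.2])].

Lemma endsP m (r : LKn m.+3) : (ends r).1 != (ends r).2 /\ val r = [set (ends r).1; (ends r).2].
Proof.
rewrite /ends; case: pickP => [[a b] /andP [H1 /eqP H2]|Hn] //=.
have [a [b [H1 H2]]] := edgeP r.
by have := Hn (a, b); rewrite /= H1 H2 eqxx.
Qed.

Definition wv m (r : LKn m.+3) (s : bool) : 'I_m.+3 :=
  if s then (if (ends r).2 == vS m false then (ends r).1 else (ends r).2)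
  else (if (ends r).1 == vS m true then (ends r).2 else (ends r).1).

Lemma W1 m (r : LKn m.+3) s : wv r s \in val r.
Proof.
have [_ ->] := endsP r; rewrite /wv; case: s; case: ifP => _; by rewrite !inE eqxx ?orbT.
Qed.

Lemma W2 m (r : LKn m.+3) s : wv r s != vS m (~~ s).
Proof.
have [H _] := endsP r; rewrite /wv.
move: H; case: (ends r) => a b /= H.
case: s => /=; case: ifP => [/eqP E|/negbT //].
- by rewrite -E.
- by rewrite -E eq_sym.
Qed.

Lemma W3 m (r : LKn m.+3) : vS m false \notin val r -> vS m true \notin val r ->
  wv r true != wv r false.
Proof.
have [H ->] := endsP r; rewrite /wv !inE.
move: H; case: (ends r) => a b /= H.
rewrite !negb_or => /andP [h1 h2] /andP [h3 h4].
case: ifP => [/eqP E|_]; first by move: h2; rewrite E eqxx.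
case: ifP => [/eqP E|_]; first by move: h3; rewrite E eqxx.
by rewrite eq_sym.
Qed.

Definition muset m (r : LKn m.+3) (j : bool * 'I_m.+1) : {set 'I_m.+3} :=
  if (vS m j.1 \in val r) && (vX j.2 \in val r) then [set vS m false; vS m true]
  else if (vS m j.1 \in val r) || (vX j.2 \in val r) then [set vS m j.1; vX j.2]
  else [set wv r j.1; vX j.2].

Lemma muset_edge m (r : LKn m.+3) j : is_edge (@Kn_adj _) (muset r j).
Proof.
rewrite /muset; case: ifP => _; first exact: is_edge2.
case: ifP => [_|/negbT]; first by apply: is_edge2; rewrite vSX.
rewrite negb_or => /andP [_ hX]; apply: is_edge2.
by apply/eqP => E; move: hX; rewrite -E W1.
Qed.

Definition mu m (r : LKn m.+3) j : LKn m.+3 := insubd (e01 m) (muset r j).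
Definition pos m (j : bool * 'I_m.+1) : LKn m.+3 := insubd (e01 m) [set vS m j.1; vX j.2].

Lemma val_mu m (r : LKn m.+3) j : val (mu r j) = muset r j.
Proof. by rewrite /mu val_insubd muset_edge. Qed.

Lemma val_pos m (j : bool * 'I_m.+1) : val (pos j) = [set vS m j.1; vX j.2].
Proof. by rewrite /pos val_insubd is_edge2 // vSX. Qed.

Lemma share_move n (e f : LKn n) v : v \in val e -> v \in val f -> (e == f) || line_adj e f.
Proof.
move=> h1 h2; case: (boolP (e == f)) => //= H.
by rewrite /line_adj H; apply/existsP; exists v; rewrite h1 h2.
Qed.

Lemma mu_legal m (r : LKn m.+3) j : (pos j == mu r j) || LKn_adj (pos j) (mu r j).
Proof.
rewrite /LKn_adj.
have [v [h1 h2]] : exists v, v \in val (pos j) /\ v \in val (mu r j).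
  rewrite val_pos val_mu /muset; case: ifP => _.
    by exists (vS m j.1); rewrite !inE eqxx; case: (j.1); rewrite eqxx ?orbT.
  case: ifP => _; first by exists (vS m j.1); rewrite !inE eqxx; split.
  by exists (vX j.2); rewrite !inE !eqxx !orbT.
exact: share_move h1 h2.
Qed.

Lemma other n (e : LKn n) v : v \in val e -> exists q, q != v /\ val e = [set v; q].
Proof.
have [a [b [ab ->]]] := edgeP e; rewrite !inE => /orP [/eqP ->|/eqP ->].
  by exists b; rewrite eq_sym.
by exists a; split => //; rewrite setUC.
Qed.

Lemma adj_form n (r w : LKn n) : line_adj r w ->
  exists p y, [/\ p \in val r, y \notin val r & val w = [set p; y]].
Proof.
case/andP => rw /existsP [v /andP [hr hw]].
have [y [yv Ew]] := other hw.
exists v, y; split => //.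
apply/negP => yr.
have [q [qv Er]] := other hr.
move: yr; rewrite Er !inE (negbTE yv) /= => /eqP yq.
by move: rw; rewrite -val_eqE Er Ew yq eqxx.
Qed.

Lemma mu_surj m (r w : LKn m.+3) : LKn_adj r w -> exists j, mu r j = w.
Proof.
move/adj_form => [p [y [pr yr Ew]]].
suff [j Hj] : exists j, muset r j = [set p; y].
  by exists j; apply: val_inj; rewrite val_mu Hj Ew.
have py : p != y by apply/eqP => E; move: yr; rewrite -E pr.
have [q [qp Er]] := other pr.
have yq : y != q by apply/eqP => E; move: yr; rewrite E Er !inE eqxx orbT.
rewrite /muset.
case: (vcases y) => [Ey|[Ey|[x Ey]]].
-
  case: (vcases p) => [Ep|[Ep|[x Ep]]].
  + by move: py; rewrite Ep Ey eqxx.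
  + case: (vcases q) => [Eq|[Eq|[x Eq]]].
    * by move: yq; rewrite Eq Ey eqxx.
    * by move: qp; rewrite Eq Ep eqxx.
    * exists (true, x) => /=; rewrite -Ep -Eq pr Er !inE eqxx orbT /=.
      by rewrite Ep Ey setUC.
  + exists (false, x) => /=; rewrite -Ey -Ep (negbTE yr) pr /=.
    by rewrite setUC.
-
  case: (vcases p) => [Ep|[Ep|[x Ep]]].
  + case: (vcases q) => [Eq|[Eq|[x Eq]]].
    * by move: qp; rewrite Eq Ep eqxx.
    * by move: yq; rewrite Eq Ey eqxx.
    * exists (false, x) => /=; rewrite -Ep -Eq pr Er !inE eqxx orbT /=.
      by rewrite Ep Ey.
  + by move: py; rewrite Ep Ey eqxx.
  + exists (true, x) => /=; rewrite -Ey -Ep (negbTE yr) pr /=.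
    by rewrite setUC.
- case: (vcases p) => [Ep|[Ep|[x' Ep]]].
  + by exists (false, x) => /=; rewrite -Ey -Ep (negbTE yr) pr /=.
  + by exists (true, x) => /=; rewrite -Ey -Ep (negbTE yr) pr /=.
  + suff [s [hs1 hs2]] : exists s, vS m s \notin val r /\ wv r s = p.
      by exists (s, x) => /=; rewrite -Ey (negbTE yr) (negbTE hs1) /= hs2.
    have inr : forall z, z \in val r -> (z == p) || (z == q) by move=> z; rewrite Er !inE.
    have pS : forall s, (p == vS m s) = false by move=> s; rewrite Ep vXS.
    case: (boolP (vS m false \in val r)) => h0.
      have Eq0 : q = vS m false by move: (inr _ h0); rewrite eq_sym pS /= => /eqP.
      exists true; split.
        by rewrite Er !inE eq_sym pS /= Eq0 vSS.
      have := W2 r true; have := inr _ (W1 r true); rewrite Eq0 /=.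
      by case/orP => /eqP -> // ; rewrite eqxx.
    case: (boolP (vS m true \in val r)) => h1.
      have Eq1 : q = vS m true by move: (inr _ h1); rewrite eq_sym pS /= => /eqP.
      exists false; split => //.
      have := W2 r false; have := inr _ (W1 r false); rewrite Eq1 /=.
      by case/orP => /eqP -> // ; rewrite eqxx.
    have := W3 h0 h1.
    case/orP: (inr _ (W1 r true)) => /eqP Et.
      by move=> _; exists true.
    case/orP: (inr _ (W1 r false)) => /eqP Ef.
      by move=> _; exists false.
    by rewrite Et Ef eqxx.
Qed.

Lemma vertex_upper m : vertex_win (@LKn_adj m.+3) (2 * m.+1).
Proof.
apply: (@vwin_of _ _ _ _ (@pos m) (@mu m)).
- by rewrite card_prod card_bool card_ord.
- by rewrite card_prod card_bool card_ord.
- exact: mu_legal.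
- exact: mu_surj.
Qed.

Lemma arith_redge n k : 3 <= n -> 12 * k < n ^ 2 ->
  (n - 2)./2 < n - 2 /\ 3 * k < (n - (n - 2)./2) * ((n - 2)./2).+1.
Proof.
move=> Hn Hk.
have E := odd_double_half (n - 2).
move: E; set h := (n - 2)./2; rewrite -muln2.
case: (odd (n - 2)) => /= E; split; nia.
Qed.

Theorem lemma4 (n : nat) : 3 <= n ->
  [/\ (vertex_win (@LKn_adj n) (2 * (n - 2)) /\
       forall k, k < 2 * (n - 2) -> ~ vertex_win (@LKn_adj n) k),
      (forall k, edge_win (@LKn_adj n) k -> n * (n - 2) <= 3 * k)
    & (forall k, redge_win (@LKn_adj n) k -> n ^ 2 <= 12 * k)].
Proof.
move=> Hn; split.
- split.
    by case: n Hn => [|[|[|m]]] // _; exact: vertex_upper.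
  by move=> k Hk; exact: vertex_lower.
- move=> k Hw; rewrite leqNgt; apply/negP => Hlt; exact: edge_lower Hn Hlt Hw.
- move=> k Hw; rewrite leqNgt; apply/negP => Hlt.
  have [H1 H2] := arith_redge Hn Hlt.
  exact: redge_lower Hn H1 H2 Hw.
Qed.
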